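(* Let $R$ be a ring, $I$ a non-empty countable set, $D=\{\delta_i\mid i\in I\}$ a family of derivations of $R$, $X=\{x_i\mid i\in I\}$ a set of distinct non-commuting indeterminates, and $S=R[X;D]$. If $S$ is left quasi-duo or right quasi-duo, then $|I|=1$.
   Context: All rings are unital and associative. A derivation of $R$ is an additive map $\delta:R\to R$ with $\delta(rs)=r\delta(s)+\delta(r)s$. The differential polynomial ring in several indeterminates $R[X;D]$ is the set of all (noncommutative) polynomials in the indeterminates $x_i\in X$ (finite $R$-linear combinations of monomials, i.e. finite words in the alphabet $X$, with coefficients on the left), with natural addition and multiplication generated by $x_ia=ax_i+\delta_i(a)$ for $a\in R$, $i\in I$ (the $\delta_i$ need not be distinct). A ring is left (right) quasi-duo if every maximal left (right) ideal is two-sided. *)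

(* Defs.v *)
From mathcomp Require Import all_boot all_algebra.
Set Implicit Arguments. Unset Strict Implicit. Unset Printing Implicit Defensive.
Import GRing.Theory.
Local Open Scope ring_scope.

Definition is_derivation (R : nzRingType) (d : R -> R) : Prop :=
  (forall a b : R, d (a + b) = d a + d b) /\
  (forall a b : R, d (a * b) = a * d b + d a * b).

Definition monomial (I : Type) (S : nzRingType) (x : I -> S) (w : seq I) : S :=
  \prod_(i <- w) x i.

(* S (with the embedding phi : R -> S and the elements x_i) is the
   differential polynomial ring R[X;D]: S is a free left R-module on the
   monomials (finite words in X), with coefficients on the left, and
   multiplication satisfies x_i a = a x_i + delta_i(a). *)
Definition is_diff_poly_ring (R S : nzRingType) (I : countType)
    (delta : I -> R -> R) (phi : {rmorphism R -> S}) (x : I -> S) : Prop :=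
  [/\ (forall s : S, exists (ws : seq (seq I)) (c : seq I -> R),
          s = \sum_(w <- ws) phi (c w) * monomial x w),
      (forall (ws : seq (seq I)) (c : seq I -> R), uniq ws ->
          \sum_(w <- ws) phi (c w) * monomial x w = 0 ->
          forall w, w \in ws -> c w = 0)
    & (forall (i : I) (a : R), x i * phi a = phi a * x i + phi (delta i a))].

Definition is_left_ideal (S : nzRingType) (L : S -> Prop) : Prop :=
  [/\ L 0, (forall a b, L a -> L b -> L (a + b)), (forall a, L a -> L (- a))
    & (forall r a, L a -> L (r * a))].

Definition is_right_ideal (S : nzRingType) (L : S -> Prop) : Prop :=
  [/\ L 0, (forall a b, L a -> L b -> L (a + b)), (forall a, L a -> L (- a))
    & (forall r a, L a -> L (a * r))].

Definition is_maximal_left_ideal (S : nzRingType) (L : S -> Prop) : Prop :=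
  [/\ is_left_ideal L, ~ L 1 &
      forall L' : S -> Prop, is_left_ideal L' -> (forall a, L a -> L' a) ->
        (forall a, L' a <-> L a) \/ (forall a, L' a)].

Definition is_maximal_right_ideal (S : nzRingType) (L : S -> Prop) : Prop :=
  [/\ is_right_ideal L, ~ L 1 &
      forall L' : S -> Prop, is_right_ideal L' -> (forall a, L a -> L' a) ->
        (forall a, L' a <-> L a) \/ (forall a, L' a)].

Definition left_quasi_duo (S : nzRingType) : Prop :=
  forall L : S -> Prop, is_maximal_left_ideal L -> is_right_ideal L.

Definition right_quasi_duo (S : nzRingType) : Prop :=
  forall L : S -> Prop, is_maximal_right_ideal L -> is_left_ideal L.

(* Main.v *)
Require Import Defs.
From mathcomp Require Import all_boot all_algebra.
From mathcomp Require Import boolp classical_sets.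
Set Implicit Arguments. Unset Strict Implicit. Unset Printing Implicit Defensive.
Import GRing.Theory.
Local Open Scope ring_scope.



Section Coef.
Variables (R S : nzRingType) (I : countType) (delta : I -> R -> R)
  (phi : {rmorphism R -> S}) (x : I -> S).
Hypothesis hder : forall i, is_derivation (delta i).
Hypothesis hS : is_diff_poly_ring delta phi x.

Definition Rep (s : S) (c : seq I -> R) := exists ws : seq (seq I),
  [/\ uniq ws, (forall w, w \notin ws -> c w = 0) &
      s = \sum_(w <- ws) phi (c w) * monomial x w].

Lemma sum_ext (ws ws' : seq (seq I)) (c : seq I -> R) :
  uniq ws -> uniq ws' -> {subset ws <= ws'} -> (forall w, w \notin ws -> c w = 0) ->
  \sum_(w <- ws) phi (c w) * monomial x w = \sum_(w <- ws') phi (c w) * monomial x w.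
Proof.
move=> u u' sub z.
rewrite [RHS](bigID (fun w => w \in ws)) /=.
rewrite [X in _ = _ + X]big1 ?addr0; last by move=> w /z ->; rewrite rmorph0 mul0r.
rewrite -[in RHS]big_filter; apply: perm_big.
apply: uniq_perm => //; first exact: filter_uniq.
move=> w; rewrite mem_filter; case wws: (w \in ws) => //=; by rewrite sub.
Qed.

Lemma Rep0 : Rep 0 (fun _ => 0).
Proof. by exists [::]; split => //; rewrite big_nil. Qed.

Lemma Rep_single a w : Rep (phi a * monomial x w) (fun v => if v == w then a else 0).
Proof.
exists [:: w]; split => //.
- by move=> v; rewrite inE => /negbTE ->.
- by rewrite big_cons big_nil eqxx addr0.
Qed.

Lemma Rep_ext s c c' : (forall v, c v = c' v) -> Rep s c -> Rep s c'.
Proof.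
move=> e [ws [u z ->]]; exists ws; split => //.
- by move=> w /z; rewrite e.
- by apply: eq_bigr => w _; rewrite e.
Qed.

Lemma Rep_add s t c d : Rep s c -> Rep t d -> Rep (s + t) (fun v => c v + d v).
Proof.
move=> [ws1 [u1 z1 ->]] [ws2 [u2 z2 ->]].
exists (undup (ws1 ++ ws2)); split.
- exact: undup_uniq.
- move=> w; rewrite mem_undup mem_cat negb_or => /andP[/z1 -> /z2 ->]; exact: addr0.
- rewrite (@sum_ext ws1 (undup (ws1++ws2))) ?undup_uniq //; last first.
    by move=> w; rewrite mem_undup mem_cat => ->.
  rewrite (@sum_ext ws2 (undup (ws1++ws2))) ?undup_uniq //; last first.
    by move=> w; rewrite mem_undup mem_cat orbC => ->.
  rewrite -big_split /=; apply: eq_bigr => w _; by rewrite rmorphD mulrDl.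
Qed.

Lemma Rep_opp s c : Rep s c -> Rep (- s) (fun v => - c v).
Proof.
move=> [ws [u z ->]]; exists ws; split => //.
- by move=> w /z ->; rewrite oppr0.
- rewrite -sumrN; apply: eq_bigr => w _; by rewrite rmorphN mulNr.
Qed.

Lemma Rep_exists s : exists c, Rep s c.
Proof.
case: hS => [hs _ _]; have [ws [c ->]] := hs s.
elim: ws => [|w ws [c' IH]]; first by exists (fun _ => 0); rewrite big_nil; exact: Rep0.
rewrite big_cons; eexists; exact: Rep_add (Rep_single _ _) IH.
Qed.

Lemma Rep_uniq s c d : Rep s c -> Rep s d -> forall v, c v = d v.
Proof.
move=> hc hd; have := Rep_add hc (Rep_opp hd); rewrite subrr.
move=> [ws [u z e]] v; apply/eqP; rewrite -subr_eq0; apply/eqP.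
case vws: (v \in ws); last by apply: z; rewrite vws.
case: hS => [_ hfree _]; exact: (hfree ws _ u (esym e) v vws).
Qed.

Lemma Rep1 : Rep 1 (fun v => if v == [::] then 1 else 0).
Proof. by have := Rep_single 1 [::]; rewrite rmorph1 mul1r /monomial big_nil. Qed.

Definition cxr (k : I) (c : seq I -> R) (v : seq I) : R :=
  if v is y :: v' then (if last y v' == k then c (belast y v') else 0) else 0.

Lemma cxr_rcons k c w : cxr k c (rcons w k) = c w.
Proof. case: w => [|y w] /=; first by rewrite eqxx. by rewrite last_rcons belast_rcons eqxx. Qed.

Lemma cxr_rcons_ne k k' c w : k' != k -> cxr k c (rcons w k') = 0.
Proof. move/negbTE=> h; case: w => [|y w] /=; first by rewrite h. by rewrite last_rcons h. Qed.

Lemma Rep_xr s c k : Rep s c -> Rep (s * x k) (cxr k c).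
Proof.
move=> [ws [u z ->]].
exists (map (rcons^~ k) ws); split.
- by rewrite map_inj_uniq //; exact: rcons_injl.
- case=> [|y v] //= nin; case: ifP => // /eqP ek; apply: z; apply: contra nin => H.
  by rewrite lastI ek; apply: map_f.
- rewrite big_distrl big_map /=; apply: eq_bigr => w _.
  by rewrite cxr_rcons -mulrA /monomial -cats1 big_cat big_seq1.
Qed.

Lemma d0 k : delta k 0 = 0.
Proof.
case: (hder k) => hadd _; have := hadd 0 0; rewrite addr0 => h.
by apply: (addrI (delta k 0)); rewrite addr0 -h.
Qed.

Definition chd (k : I) (c : seq I -> R) (v : seq I) : R :=
  if v is y :: v' then (if y == k then c v' else 0) else 0.
Definition cxl k c v := chd k c v + delta k (c v).

Lemma Rep_xl s c k : Rep s c -> Rep (x k * s) (cxl k c).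
Proof.
move=> [ws [u z ->]].
have hc : Rep (\sum_(w <- ws) phi (c w) * monomial x (k :: w)) (chd k c).
  exists (map (cons k) ws); split.
  - by rewrite map_inj_uniq // => a b [].
  - case=> [|y v] //= nin; case: eqP => // eyk; apply: z; apply: contra nin => H.
    by rewrite eyk; exact: map_f.
  - by rewrite big_map; apply: eq_bigr => w _ /=; rewrite eqxx.
have hd : Rep (\sum_(w <- ws) phi (delta k (c w)) * monomial x w) (fun v => delta k (c v)).
  by exists ws; split => // w /z ->; exact: d0.
suff -> : x k * (\sum_(w <- ws) phi (c w) * monomial x w) =
  \sum_(w <- ws) phi (c w) * monomial x (k :: w) +
  \sum_(w <- ws) phi (delta k (c w)) * monomial x w by exact: Rep_add hc hd.
case: hS => _ _ hcomm.
rewrite big_distrr -big_split /=; apply: eq_bigr => w _.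
by rewrite mulrA hcomm mulrDl -mulrA /monomial big_cons.
Qed.


Definition bnd (c : seq I -> R) n := forall v, (n <= size v)%N -> c v = 0.

Lemma Rep_bnd s c : Rep s c -> exists n, bnd c n.
Proof.
move=> [ws [u z _]]; exists (\max_(w <- ws) size w).+1 => v hv; apply: z.
apply/negP => vin; move: hv; rewrite ltnNge.
by rewrite (@leq_bigmax_seq _ ws xpredT size v vin).
Qed.

Lemma bnd_mono c n n' : bnd c n -> (n <= n')%N -> bnd c n'.
Proof. by move=> b le v hv; apply: b; exact: leq_trans hv. Qed.

Lemma right_proper (i j : I) : i != j -> forall f g : S,
  x j * f + (1 - x i * x j) * g <> 1.
Proof.
move=> ij f g E.
have [cf Hf] := Rep_exists f; have [cg Hg] := Rep_exists g.
have HL := Rep_add (Rep_xl j Hf) (Rep_add Hg (Rep_opp (Rep_xl i (Rep_xl j Hg)))).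
have e : x j * f + (g + - (x i * (x j * g))) = 1 by rewrite -E mulrBl mul1r mulrA.
rewrite e in HL.
have E' := Rep_uniq HL Rep1.
have ji : (j == i) = false by rewrite eq_sym; exact/negbTE.
have ij' : (i == j) = false by exact/negbTE.
have stepA : forall n, bnd cf n.+1 -> bnd cg n -> bnd cf n.
  move=> n bf bg v hv; have := E' (j :: v).
  rewrite /cxl /= eqxx ji (bf (j :: v)) // (bg (j :: v)) ?(leqW hv) //.
  by rewrite (bg v) // !d0 !add0r d0 oppr0 !addr0.
have stepB : forall n, bnd cf n.+1 -> bnd cg n.+1 -> bnd cg n.
  move=> n bf bg v hv; have := E' (i :: j :: v).
  rewrite /cxl /= !eqxx ?ji ?ij'.
  have h1 : (n.+1 <= size (i :: j :: v))%N by rewrite /= ltnS leqW.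
  have h2 : (n.+1 <= size (j :: v))%N by exact: hv.
  rewrite (bf _ h1) (bg _ h1) (bg _ h2) !d0 !add0r d0 !addr0.
  by move/eqP; rewrite oppr_eq0 => /eqP.
have [nf bf] := Rep_bnd Hf; have [ng bg] := Rep_bnd Hg.
have P0 : forall N, bnd cf N.+1 -> bnd cg N -> bnd cf 1 /\ bnd cg 0.
  elim=> [|N IH] b1 b2; first by [].
  have b3 := stepA _ b1 b2; apply: IH => //; exact: stepB.
have [b1 b2] := P0 (maxn nf ng) (bnd_mono bf (leq_trans (leq_maxl _ _) (leqnSn _)))
   (bnd_mono bg (leq_maxr _ _)).
have b3 := stepA _ b1 b2.
have := E' [::]; rewrite /cxl /= (b3 [::]) // (b2 [::]) // !d0 !add0r d0 oppr0.
by move/eqP; rewrite eq_sym oner_eq0.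
Qed.

Lemma left_proper (i j : I) : i != j -> forall f g : S,
  f * x j + g * (1 - x j * x i) <> 1.
Proof.
move=> ij f g E.
have [cf Hf] := Rep_exists f; have [cg Hg] := Rep_exists g.
have HL := Rep_add (Rep_xr j Hf) (Rep_add Hg (Rep_opp (Rep_xr i (Rep_xr j Hg)))).
have e : f * x j + (g + - (g * x j * x i)) = 1 by rewrite -E mulrBr mulr1 mulrA.
rewrite e in HL.
have E' := Rep_uniq HL Rep1.
have step : forall n, bnd cg n.+2 -> bnd cg n.
  move=> n b v hv; have := E' (rcons (rcons v j) i).
  rewrite cxr_rcons_ne // cxr_rcons cxr_rcons (b (rcons (rcons v j) i)); last first.
    by rewrite !size_rcons !ltnS.
  have -> : (rcons (rcons v j) i == [::]) = false by case: (rcons v j).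
  by rewrite !add0r; move/eqP; rewrite oppr_eq0 => /eqP.
have [n b] := Rep_bnd Hg.
have B0 : forall N, bnd cg N -> bnd cg 0.
  elim=> [|N IH] //; move=> h; apply: IH; apply: step; apply: bnd_mono h _; exact: leqnSn.
have := E' [::]; rewrite /= (B0 _ b [::]) // oppr0 !addr0.
by move/eqP; rewrite eq_sym oner_eq0.
Qed.

End Coef.

Local Open Scope classical_set_scope.
Lemma max_left (T : nzRingType) (L0 : T -> Prop) : is_left_ideal L0 -> ~ L0 1 ->
  exists M, is_maximal_left_ideal M /\ (forall a, L0 a -> M a).
Proof.
move=> hL0 nL0.
pose P := fun X : set T => X = set0 \/ [/\ is_left_ideal X, ~ X 1 & forall a, L0 a -> X a].
have good : forall F : set (set T), F `<=` P -> forall X, F X -> forall a, X a ->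
   [/\ is_left_ideal X, ~ X 1 & forall a, L0 a -> X a].
  move=> F FP X FX a Xa; case: (FP X FX) => // X0; by move: Xa; rewrite X0.
have [A [PA Amax]] : exists A, P A /\ forall B, A `<` B -> ~ P B.
  apply: Zorn_bigcup => F FP Ftot.
  case: (pselect (exists X, F X /\ exists a, X a)) => [[X0 [FX0 [a0 Xa0]]]|none]; last first.
    left; apply/seteqP; split => a /=; last by []. move=> [X FX Xa]; case: none; exists X; split; [exact: FX | by exists a].
  have [iX0 nX0 sX0] := good F FP X0 FX0 a0 Xa0.
  right; split.
  - case: iX0 => h0 _ _ _; split.
    + by exists X0.
    + move=> a b [X FX Xa] [Y FY Yb]; have [XY|YX] := Ftot X Y FX FY.
      * have [[_ hadd _ _] _ _] := good F FP Y FY b Yb; exists Y => //; apply: hadd => //; exact: XY.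
      * have [[_ hadd _ _] _ _] := good F FP X FX a Xa; exists X => //; apply: hadd => //; exact: YX.
    + move=> a [X FX Xa]; have [[_ _ hopp _] _ _] := good F FP X FX a Xa; exists X => //; exact: hopp.
    + move=> r a [X FX Xa]; have [[_ _ _ hmul] _ _] := good F FP X FX a Xa; exists X => //; exact: hmul.
  - move=> [X FX X1]; have [_ n1 _] := good F FP X FX 1 X1; exact: n1 X1.
  - by move=> a La; exists X0 => //; exact: sX0.
have A0 : A <> set0.
  move=> A0; apply: (Amax L0); last by right; split.
  rewrite A0; split; first by [].
  move=> h; case: hL0 => h0 _ _ _; exact: h 0 h0.
case: PA => [/A0 //|[iA nA sA]].
exists A; split => //; split => // L' iL' AL'.
case: (pselect (L' 1)) => L'1.
  right => a; case: iL' => _ _ _ hmul; rewrite -[a]mulr1; exact: hmul.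
left => a; split; last exact: AL'.
move=> L'a; apply: contrapT => nAa; apply: (Amax L'); last first.
  right; split => // b /sA; exact: AL'.
split => // h; exact: nAa (h a L'a).
Qed.

Lemma max_right (T : nzRingType) (L0 : T -> Prop) : is_right_ideal L0 -> ~ L0 1 ->
  exists M, is_maximal_right_ideal M /\ (forall a, L0 a -> M a).
Proof.
move=> hL0 nL0.
pose P := fun X : set T => X = set0 \/ [/\ is_right_ideal X, ~ X 1 & forall a, L0 a -> X a].
have good : forall F : set (set T), F `<=` P -> forall X, F X -> forall a, X a ->
   [/\ is_right_ideal X, ~ X 1 & forall a, L0 a -> X a].
  move=> F FP X FX a Xa; case: (FP X FX) => // X0; by move: Xa; rewrite X0.
have [A [PA Amax]] : exists A, P A /\ forall B, A `<` B -> ~ P B.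
  apply: Zorn_bigcup => F FP Ftot.
  case: (pselect (exists X, F X /\ exists a, X a)) => [[X0 [FX0 [a0 Xa0]]]|none]; last first.
    left; apply/seteqP; split => a /=; last by []. move=> [X FX Xa]; case: none; exists X; split; [exact: FX | by exists a].
  have [iX0 nX0 sX0] := good F FP X0 FX0 a0 Xa0.
  right; split.
  - case: iX0 => h0 _ _ _; split.
    + by exists X0.
    + move=> a b [X FX Xa] [Y FY Yb]; have [XY|YX] := Ftot X Y FX FY.
      * have [[_ hadd _ _] _ _] := good F FP Y FY b Yb; exists Y => //; apply: hadd => //; exact: XY.
      * have [[_ hadd _ _] _ _] := good F FP X FX a Xa; exists X => //; apply: hadd => //; exact: YX.
    + move=> a [X FX Xa]; have [[_ _ hopp _] _ _] := good F FP X FX a Xa; exists X => //; exact: hopp.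
    + move=> r a [X FX Xa]; have [[_ _ _ hmul] _ _] := good F FP X FX a Xa; exists X => //; exact: hmul.
  - move=> [X FX X1]; have [_ n1 _] := good F FP X FX 1 X1; exact: n1 X1.
  - by move=> a La; exists X0 => //; exact: sX0.
have A0 : A <> set0.
  move=> A0; apply: (Amax L0); last by right; split.
  rewrite A0; split; first by [].
  move=> h; case: hL0 => h0 _ _ _; exact: h 0 h0.
case: PA => [/A0 //|[iA nA sA]].
exists A; split => //; split => // L' iL' AL'.
case: (pselect (L' 1)) => L'1.
  right => a; case: iL' => _ _ _ hmul; rewrite -[a]mul1r; exact: hmul.
left => a; split; last exact: AL'.
move=> L'a; apply: contrapT => nAa; apply: (Amax L'); last first.
  right; split => // b /sA; exact: AL'.
split => // h; exact: nAa (h a L'a).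
Qed.

Local Close Scope classical_set_scope.

Theorem theorem5p3 (R : nzRingType) (I : countType) (i0 : I)
    (delta : I -> R -> R) (hder : forall i : I, is_derivation (delta i))
    (S : nzRingType) (phi : {rmorphism R -> S}) (x : I -> S)
    (hS : is_diff_poly_ring delta phi x) :
  left_quasi_duo S \/ right_quasi_duo S -> forall i j : I, i = j.
Proof.
move=> hq i j; case: (eqVneq i j) => // ij; exfalso.
case: hq => [hl|hr].
- pose L0 := fun a : S => exists f g : S, a = f * x j + g * (1 - x j * x i).
  have iL0 : is_left_ideal L0.
    split.
    + by exists 0, 0; rewrite !mul0r addr0.
    + move=> a b [f1 [g1 ->]] [f2 [g2 ->]]; exists (f1 + f2), (g1 + g2).
      by rewrite !mulrDl addrACA.
    + move=> a [f [g ->]]; exists (- f), (- g); by rewrite !mulNr opprD.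
    + move=> r a [f [g ->]]; exists (r * f), (r * g); by rewrite mulrDr !mulrA.
  have nL0 : ~ L0 1.
    move=> [f [g E]]; exact: (left_proper hS ij (esym E)).
  have [M [hM sM]] := max_left iL0 nL0.
  have [_ hadd _ hmul] := hl M hM.
  case: hM => _ nM _.
  have Mxj : M (x j) by apply: sM; exists 1, 0; rewrite mul1r mul0r addr0.
  have M1 : M (1 - x j * x i) by apply: sM; exists 0, 1; rewrite mul0r add0r mul1r.
  apply: nM; have := hadd _ _ M1 (hmul (x i) _ Mxj); by rewrite subrK.
- pose L0 := fun a : S => exists f g : S, a = x j * f + (1 - x i * x j) * g.
  have iL0 : is_right_ideal L0.
    split.
    + by exists 0, 0; rewrite !mulr0 addr0.
    + move=> a b [f1 [g1 ->]] [f2 [g2 ->]]; exists (f1 + f2), (g1 + g2).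
      by rewrite !mulrDr addrACA.
    + move=> a [f [g ->]]; exists (- f), (- g); by rewrite !mulrN opprD.
    + move=> r a [f [g ->]]; exists (f * r), (g * r); by rewrite mulrDl !mulrA.
  have nL0 : ~ L0 1.
    move=> [f [g E]]; exact: (right_proper hder hS ij (esym E)).
  have [M [hM sM]] := max_right iL0 nL0.
  have [_ hadd _ hmul] := hr M hM.
  case: hM => _ nM _.
  have Mxj : M (x j) by apply: sM; exists 1, 0; rewrite mulr1 mulr0 addr0.
  have M1 : M (1 - x i * x j) by apply: sM; exists 0, 1; rewrite mulr0 add0r mulr1.
  apply: nM; have := hadd _ _ M1 (hmul (x i) _ Mxj); by rewrite subrK.
Qed.
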